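(* Let $g:\mathbb{R}\to\mathbb{R}$ be a function supported on $[-1,1]$, i.e. $g(x)=0$ for $x\notin[-1,1]$, and let $\theta^*\in\Theta_k$. Then there is $\theta'=(w',\mu',\tau')\in\Theta_k$ such that $\mu'_i\in[-1,1]$ for all $i\in[k]$ and \[ \|g-\mathcal{M}_{\theta'}\|_1\le 5\cdot\|g-\mathcal{M}_{\theta^*}\|_1. \]
   Context: $\Theta_k=\{(w,\mu,\tau): w\in\mathbb{R}^k, w_i\ge0,\sum_i w_i=1,\ \mu\in\mathbb{R}^k,\ \tau\in\mathbb{R}_{>0}^k\}$; for $\theta=(w,\mu,\tau)\in\Theta_k$, $\mathcal{M}_\theta(x)=\sum_{i=1}^k w_i\frac{\tau_i}{\sqrt{2\pi}}e^{-\tau_i^2(x-\mu_i)^2/2}$. $\|h\|_1=\int|h|$. *)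

(* Defs.v *)
From HB Require Import structures.
From mathcomp Require Import all_boot all_order all_algebra.
From mathcomp Require Import all_classical all_reals all_analysis.
Set Implicit Arguments. Unset Strict Implicit. Unset Printing Implicit Defensive.
Import Order.TTheory GRing.Theory Num.Theory.
Import numFieldNormedType.Exports.
Local Open Scope classical_set_scope.
Local Open Scope ring_scope.

Definition in_Theta (R : realType) (k : nat) (w mu tau : 'I_k -> R) : Prop :=
  (forall i, 0 <= w i) /\ (\sum_(i < k) w i = 1) /\ (forall i, 0 < tau i).

Definition mixture (R : realType) (k : nat) (w mu tau : 'I_k -> R) (x : R) : R :=
  \sum_(i < k) w i * (tau i / Num.sqrt (2 * pi))
               * expR (- (tau i ^+ 2 * (x - mu i) ^+ 2) / 2).

Definition L1dist (R : realType) (f h : R -> R) : \bar R :=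
  (\int[@lebesgue_measure R]_(x in [set: R]) (`|f x - h x|)%:E)%E.

(* Main.v *)
Require Import Defs.
From HB Require Import structures.
From mathcomp Require Import all_boot all_order all_algebra.
From mathcomp Require Import all_classical all_reals all_analysis.
From mathcomp Require Import ring lra measurable_realfun.
Import Order.TTheory GRing.Theory Num.Theory.
Local Open Scope classical_set_scope.
Local Open Scope ring_scope.

Lemma normal_pdf_tau (R : realType) (m t x : R) : 0 < t ->
  t / Num.sqrt (2 * pi) * expR (- (t ^+ 2 * (x - m) ^+ 2) / 2) =
  normal_pdf m t^-1 x.
Proof.
move=> t0.
have tn0 : t^-1 != 0 by rewrite invr_neq0 // gt_eqF.
rewrite /normal_pdf (negbTE tn0) /normal_peak /normal_fun.
have pi0 : 0 < pi :> R by exact: pi_gt0.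
congr (_ * expR _).
  rewrite -mulrnAr [in RHS]sqrtrM ?sqr_ge0 // sqrtr_sqr ger0_norm ?invr_ge0 ?ltW //.
  by rewrite invfM invrK mulrC -[pi *+ 2]mulr_natl mulrC.
rewrite -mulr_natr. field.
by rewrite gt_eqF.
Qed.

Lemma fin5 (R : realType) (d : \bar R) : (0 <= d)%E -> (d + 2%:E * d <= 5%:E * d)%E.
Proof.
case: d => [r| |] // r0.
  rewrite -EFinM -EFinD -EFinM lee_fin.
  rewrite lee_fin in r0.
  lra.
rewrite mulry gtr0_sg // mul1e mulry gtr0_sg // mul1e; exact: leey.
Qed.

Definition clamp (R : realType) (m : R) : R :=
  if m < -1 then -1 else if 1 < m then 1 else m.

Arguments clamp {R}.

Lemma clamp_in (R : realType) (m : R) : -1 <= clamp m <= 1.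
Proof.
rewrite /clamp; case: ifP => h1; first by apply/andP; split; lra.
case: ifP => h2; first by apply/andP; split; lra.
by apply/andP; split; rewrite leNgt ?h1 ?h2.
Qed.

Lemma clamp_sq (R : realType) (x m : R) : -1 <= x <= 1 ->
  (x - clamp m) ^+ 2 <= (x - m) ^+ 2.
Proof.
move=> /andP[h1 h2]; rewrite /clamp; case: ifP => h3; first nra.
case: ifP => h4; first nra.
by [].
Qed.

Lemma pdf_le (R : realType) (m p s x : R) : s != 0 ->
  (x - p) ^+ 2 <= (x - m) ^+ 2 -> normal_pdf m s x <= normal_pdf p s x.
Proof.
move=> s0 h; rewrite /normal_pdf (negbTE s0) /normal_fun.
apply: ler_wpM2l; first exact: normal_peak_ge0.
rewrite ler_expR !mulNr lerN2 ler_wpM2r // invr_ge0 mulrn_wge0 // ?sqr_ge0 //.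
Qed.

Definition Dout (R : realType) : set R := ~` [set x : R | -1 <= x <= 1].

Arguments Dout {R}.

Lemma Dout_meas (R : realType) : measurable (@Dout R).
Proof.
have -> : @Dout R = ~` `[-1, 1]%classic.
  by apply/seteqP; split => x; rewrite /Dout /= in_itv.
by apply: measurableC; exact: measurable_itv.
Qed.

Lemma indic_out (R : realType) (x : R) : ~ (-1 <= x <= 1) -> \1_(@Dout R) x = 1 :> R.
Proof. by move=> h; rewrite indicE mem_set. Qed.

Lemma indic_in (R : realType) (x : R) : -1 <= x <= 1 -> \1_(@Dout R) x = 0 :> R.
Proof. by move=> h; rewrite indicE memNset //= => /(_ h). Qed.

Lemma comp_bound (R : realType) (m s : R) : s != 0 ->
  (\int[@lebesgue_measure R]_(x in [set: R])
      (`|normal_pdf m s x - normal_pdf (clamp m) s x|)%:E <=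
   2%:E * \int[@lebesgue_measure R]_(x in [set: R])
      (\1_Dout x * normal_pdf m s x)%:E)%E.
Proof.
move=> s0.
set a := normal_pdf m s; set b := normal_pdf (clamp m) s.
have ma : measurable_fun setT a := measurable_normal_pdf _ _.
have mb : measurable_fun setT b := measurable_normal_pdf _ _.
have mi : measurable_fun setT (\1_Dout : R -> R) := @measurable_indic _ _ R setT Dout (@Dout_meas R).
have a0 x : 0 <= a x := normal_pdf_ge0 _ _ _.
have b0 x : 0 <= b x := normal_pdf_ge0 _ _ _.
have key x : `|a x - b x| + a x <= 2 * (\1_Dout x * a x) + b x.
  case: (pselect (-1 <= x <= 1)) => hx.
  - rewrite indic_in // mul0r mulr0 add0r.
    have hab : a x <= b x by apply: pdf_le => //; exact: clamp_sq.
    rewrite ler0_norm; last by rewrite subr_le0.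
    lra.
  - rewrite indic_out // mul1r.
    have : `|a x - b x| <= a x + b x.
      by rewrite ler_norml; apply/andP; split; have := a0 x; have := b0 x; lra.
    lra.
have mab : measurable_fun setT (fun x => `|a x - b x|).
  by apply: measurableT_comp; [exact: normr_measurable | exact: measurable_funB].
have mia : measurable_fun setT (fun x => \1_Dout x * a x).
  exact: measurable_funM.
have ia0 x : 0 <= \1_Dout x * a x.
  by rewrite mulr_ge0 // indicE ler0n.
have I1 : (\int[@lebesgue_measure R]_(x in [set: R]) (a x)%:E = 1)%E := integral_normal_pdf _ _.
have I2 : (\int[@lebesgue_measure R]_(x in [set: R]) (b x)%:E = 1)%E := integral_normal_pdf _ _.
have : (\int[@lebesgue_measure R]_(x in [set: R]) (`|a x - b x|)%:E + 1 <=
   2%:E * \int[@lebesgue_measure R]_(x in [set: R]) (\1_Dout x * a x)%:E + 1)%E.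
  rewrite -{1}I1 -I2 -ge0_integralD //.
  rewrite -(@ge0_integralZl _ _ _ (@lebesgue_measure R) _ measurableT (fun x => (\1_Dout x * a x)%:E) _ 2%:E) //.
  rewrite -ge0_integralD //.
  apply: (@ge0_le_integral _ _ _ (@lebesgue_measure R) _ measurableT) => //.
  all: try (move=> x _; rewrite -?EFinM -?EFinD lee_fin).
  all: try (exact: key).
  all: try (by rewrite ?addr_ge0 ?mulr_ge0).
  all: try (apply: emeasurable_funD).
  all: try (apply: measurable_funeM).
  all: try (by apply/measurable_EFinP).
  by rewrite leeD2rE.
Qed.

Theorem lemma17 (R : realType) (k : nat) (g : R -> R)
    (w mu tau : 'I_k -> R) :
  measurable_fun [set: R] g ->
  (forall x : R, ~ (-1 <= x <= 1) -> g x = 0) ->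
  in_Theta w mu tau ->
  exists w' mu' tau' : 'I_k -> R,
    [/\ in_Theta w' mu' tau',
        (forall i, -1 <= mu' i <= 1) &
        (L1dist g (mixture w' mu' tau') <= 5%:E * L1dist g (mixture w mu tau))%E].
Proof.
move=> mg gsupp [w0 [w1 t0]].
exists w, (fun i => clamp (mu i)), tau; split.
- by split.
- by move=> i; exact: clamp_in.
have s0 i : (tau i)^-1 != 0 by rewrite invr_neq0 // gt_eqF.
have mixE (m : 'I_k -> R) x : mixture w m tau x =
    \sum_(i < k) w i * normal_pdf (m i) (tau i)^-1 x.
  by rewrite /mixture; apply: eq_bigr => i _; rewrite -mulrA normal_pdf_tau.
have mM (m : 'I_k -> R) : measurable_fun setT (mixture w m tau).
  rewrite (_ : mixture w m tau = fun x => \sum_(i < k) w i * normal_pdf (m i) (tau i)^-1 x);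
    last by apply/funext => x; exact: mixE.
  apply: measurable_sum => i; apply: measurable_funM; first exact: measurable_cst.
  exact: measurable_normal_pdf.
have M0 (m : 'I_k -> R) x : 0 <= mixture w m tau x.
  by rewrite mixE; apply: sumr_ge0 => i _; rewrite mulr_ge0 // normal_pdf_ge0.
pose F i x := `|normal_pdf (mu i) (tau i)^-1 x - normal_pdf (clamp (mu i)) (tau i)^-1 x|.
pose G i x := \1_Dout x * normal_pdf (mu i) (tau i)^-1 x.
have mF i : measurable_fun setT (F i).
  apply: measurableT_comp; [exact: normr_measurable | apply: measurable_funB; exact: measurable_normal_pdf].
have F0 i x : 0 <= F i x := normr_ge0 _.
have mi : measurable_fun setT (\1_Dout : R -> R) := @measurable_indic _ _ R setT Dout (@Dout_meas R).
have mG i : measurable_fun setT (G i).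
  apply: measurable_funM => //; exact: measurable_normal_pdf.
have mgM (m : 'I_k -> R) : measurable_fun setT (fun x => `|g x - mixture w m tau x|).
  apply: measurableT_comp; [exact: normr_measurable | exact: (measurable_funB mg (mM m))].
set d := L1dist g (mixture w mu tau).
have d0 : (0 <= d)%E by apply: integral_ge0 => x _; rewrite lee_fin.
have step1 : (L1dist g (mixture w (fun i => clamp (mu i)) tau) <=
    d + \sum_(i < k) (w i)%:E * \int[@lebesgue_measure R]_(x in [set: R]) (F i x)%:E)%E.
  apply: (@le_trans _ _ (\int[@lebesgue_measure R]_(x in [set: R])
     ((`|g x - mixture w mu tau x|)%:E + \sum_(i < k) (w i)%:E * (F i x)%:E))%E).
    apply: (@ge0_le_integral _ _ _ (@lebesgue_measure R) _ measurableT).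
    - by move=> x _; rewrite lee_fin.
    - by apply/measurable_EFinP; exact: mgM.
    - apply: emeasurable_funD; first by apply/measurable_EFinP; exact: mgM.
      apply: emeasurable_sum => i; apply: measurable_funeM.
      by apply/measurable_EFinP; exact: mF.
    move=> x _.
    under eq_bigr do rewrite -EFinM.
    rewrite sumEFin -EFinD lee_fin !mixE.
    set A := \sum_(i < k) _.
    set B := \sum_(i < k) _.
    have AB : B - A = \sum_(i < k) w i * (normal_pdf (mu i) (tau i)^-1 x -
        normal_pdf (clamp (mu i)) (tau i)^-1 x).
      by rewrite /A /B -sumrB; apply: eq_bigr => i _; rewrite mulrBr.
    have -> : g x - A = (g x - B) + (B - A) by ring.
    apply: (le_trans (ler_normD _ _)); rewrite lerD2l AB.
    apply: (le_trans (ler_norm_sum _ _ _)); apply: ler_sum => i _.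
    by rewrite normrM (ger0_norm (w0 i)).
  rewrite ge0_integralD //.
  all: try (by move=> x _; rewrite lee_fin).
  all: try (by apply/measurable_EFinP; exact: mgM).
  all: try (by move=> x _; rewrite sume_ge0 // => i _; rewrite mule_ge0 // lee_fin ?F0).
  all: try (by apply: emeasurable_sum => i; apply: measurable_funeM;
    apply/measurable_EFinP; exact: mF).
  apply: leeD2l; rewrite ge0_integral_sum //.
  all: try (by move=> i; apply: measurable_funeM; apply/measurable_EFinP; exact: mF).
  all: try (by move=> i x _; rewrite mule_ge0 // lee_fin ?F0).
  apply: lee_sum => i _; rewrite ge0_integralZl //.
  all: try (by apply/measurable_EFinP; exact: mF).
  all: try (by move=> x _; rewrite lee_fin ?F0).
  all: try (by rewrite lee_fin).
have step2 : (\sum_(i < k) (w i)%:E * \int[@lebesgue_measure R]_(x in [set: R]) (F i x)%:E <=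
    \sum_(i < k) (w i)%:E * (2%:E * \int[@lebesgue_measure R]_(x in [set: R]) (G i x)%:E))%E.
  apply: lee_sum => i _; apply: lee_wpmul2l; first by rewrite lee_fin.
  exact: comp_bound.
have step3 : (\sum_(i < k) (w i)%:E * (2%:E * \int[@lebesgue_measure R]_(x in [set: R]) (G i x)%:E) =
    2%:E * \int[@lebesgue_measure R]_(x in [set: R]) (\1_Dout x * mixture w mu tau x)%:E)%E.
  have G0 i x : 0 <= G i x by rewrite /G mulr_ge0 // ?normal_pdf_ge0 // indicE ler0n.
  have -> : (\int[@lebesgue_measure R]_(x in [set: R]) (\1_Dout x * mixture w mu tau x)%:E =
      \int[@lebesgue_measure R]_(x in [set: R]) (\sum_(i < k) (w i)%:E * (G i x)%:E))%E.
    apply: eq_integral => x _; rewrite mixE mulr_sumr -sumEFin.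
    by apply: eq_bigr => i _; rewrite -EFinM /G mulrCA.
  rewrite ge0_integral_sum //.
  all: try (by move=> i; apply: measurable_funeM; apply/measurable_EFinP; exact: mG).
  all: try (by move=> i x _; rewrite mule_ge0 // lee_fin ?G0).
  rewrite ge0_sume_distrr //.
  all: try (by move=> i _; apply: integral_ge0 => x _; rewrite mule_ge0 // lee_fin ?G0).
  apply: eq_bigr => i _; rewrite ge0_integralZl //.
  all: try (by apply/measurable_EFinP; exact: mG).
  all: try (by move=> x _; rewrite lee_fin ?G0).
  all: try (by rewrite lee_fin).
  by rewrite muleCA.
have step4 : (\int[@lebesgue_measure R]_(x in [set: R]) (\1_Dout x * mixture w mu tau x)%:E <= d)%E.
  apply: (@ge0_le_integral _ _ _ (@lebesgue_measure R) _ measurableT).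
  all: try (by move=> x _; rewrite lee_fin mulr_ge0 // indicE ler0n).
  all: try (by apply/measurable_EFinP; apply: measurable_funM => //; exact: mM).
  all: try (by apply/measurable_EFinP; exact: mgM).
  move=> x _; rewrite lee_fin; case: (pselect (-1 <= x <= 1)) => hx.
    by rewrite indic_in // mul0r.
  by rewrite indic_out // mul1r gsupp // sub0r normrN ger0_norm.

apply: (le_trans step1); apply: (@le_trans _ _ (d + 2%:E * d)%E).
  apply: leeD2l; apply: (le_trans step2); rewrite step3.
  by apply: lee_wpmul2l => //; rewrite lee_fin.
exact: fin5.
Qed.
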